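(* Let $\Bbbk$ be a field of characteristic $0$ and let $A=\Bbbk\bar Q_1$ be the path algebra of the quiver with vertices $\{1,2\}$ and arrows $t:1\to2$, $s:2\to1$, viewed as an algebra over $B=\Bbbk e_1\oplus\Bbbk e_2$. Any $B$-linear double quasi-Poisson bracket on $A$ which has degree at most $+4$ on generators must be one of the following: Case 1: $\{\!\{s,s\}\!\}=0$, $\{\!\{t,t\}\!\}=0$ and either (1.a) $\{\!\{t,s\}\!\}=\frac\delta2(st\otimes e_1-e_2\otimes ts)$ with $\delta\in\{\pm1\}$, or (1.b) $\{\!\{t,s\}\!\}=\gamma e_2\otimes e_1+\phi\,st\otimes ts+\alpha(st\otimes e_1+e_2\otimes ts)$ with $\alpha,\gamma,\phi\in\Bbbk$, $\alpha^2=\frac14+\gamma\phi$; Case 2: $\{\!\{s,s\}\!\}=0$, $\{\!\{t,t\}\!\}=\lambda(tst\otimes t-t\otimes tst)$ with $\lambda\in\Bbbk^\times$, and $\{\!\{t,s\}\!\}=\frac\delta2(st\otimes e_1-e_2\otimes ts)$ with $\delta\in\{\pm1\}$; Case 3: $\{\!\{t,t\}\!\}=0$, $\{\!\{s,s\}\!\}=\lambda(sts\otimes s-s\otimes sts)$ with $\lambda\in\Bbbk^\times$, and $\{\!\{t,s\}\!\}=\frac\delta2(st\otimes e_1-e_2\otimes ts)$ with $\delta\in\{\pm1\}$.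
   Context: The path algebra is generated by $e_1,e_2,t,s$ with $e_ie_j=\delta_{ij}e_i$, $e_1+e_2=1$, $t=e_1te_2$, $s=e_2se_1$. Grade $A$ by $|s|=|t|=1$ (idempotents in degree 0) and $A\otimes A$ by total degree; ''degree at most $+4$ on generators'' means each of $\{\!\{s,s\}\!\},\{\!\{t,t\}\!\},\{\!\{t,s\}\!\}$ is a sum of homogeneous terms of degree at most $4$. $\otimes=\otimes_\Bbbk$; Sweedler notation; outer structure $x(d'\otimes d'')y=xd'\otimes d''y$. A $B$-linear double bracket is a $\Bbbk$-bilinear map $A\times A\to A\otimes A$ vanishing when an argument lies in $B$, with $\{\!\{a,b\}\!\}=-\{\!\{b,a\}\!\}''\otimes\{\!\{b,a\}\!\}'$ and $\{\!\{a,bc\}\!\}=\{\!\{a,b\}\!\}c+b\{\!\{a,c\}\!\}$. Triple bracket: $\{\!\{a,b,c\}\!\}=\{\!\{a,\{\!\{b,c\}\!\}'\}\!\}\otimes\{\!\{b,c\}\!\}''+\tau\{\!\{b,\{\!\{c,a\}\!\}'\}\!\}\otimes\{\!\{c,a\}\!\}''+\tau^2\{\!\{c,\{\!\{a,b\}\!\}'\}\!\}\otimes\{\!\{a,b\}\!\}''$, $\tau(x_1\otimes x_2\otimes x_3)=x_3\otimes x_1\otimes x_2$. Quasi-Poisson: $\{\!\{a,b,c\}\!\}=\frac14\sum_{r=1,2}(ce_ra\otimes e_rb\otimes e_r-ce_ra\otimes e_r\otimes be_r-ce_r\otimes ae_rb\otimes e_r+ce_r\otimes ae_r\otimes be_r-e_ra\otimes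 e_rb\otimes e_rc+e_ra\otimes e_r\otimes be_rc+e_r\otimes ae_rb\otimes e_rc-e_r\otimes ae_r\otimes be_rc)$ for all $a,b,c$. *)

(* Defs.v *)
From HB Require Import structures.
From mathcomp Require Import all_boot all_order all_algebra.
From mathcomp Require Import finmap monalg.
Set Implicit Arguments. Unset Strict Implicit. Unset Printing Implicit Defensive.
Import GRing.Theory.
Local Open Scope ring_scope.

Section PathAlgebra.
Variable F : fieldType.

(* A nonzero path of the quiver is determined by its starting (left) vertex
   and its length: false = vertex 1, true = vertex 2.
   (false, 0) = e1, (true, 0) = e2, (false, 1) = t, (true, 1) = s,
   (false, 2) = ts, (true, 2) = st, (false, 3) = tst, ... *)
Definition qpath := (bool * nat)%type.

(* ending (right) vertex of a path: each arrow switches vertex *)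
Definition pend (p : qpath) : bool := if odd p.2 then ~~ p.1 else p.1.

(* A = kQ, with k-basis the paths; A (x) A and A (x) A (x) A over k have as
   k-bases the pairs / triples of paths. *)
Definition Alg := @malg qpath F.
Definition Alg2 := @malg (qpath * qpath)%type F.
Definition Alg3 := @malg (qpath * qpath * qpath)%type F.

Definition bilext (X Y Z : choiceType) (f : X -> Y -> (@malg Z F))
  (a : (@malg X F)) (b : (@malg Y F)) : (@malg Z F) :=
  \sum_(x <- msupp a) \sum_(y <- msupp b) (a@_x * b@_y) *: f x y.

Definition linext (X Z : choiceType) (f : X -> (@malg Z F))
  (a : (@malg X F)) : (@malg Z F) :=
  \sum_(x <- msupp a) a@_x *: f x.

(* product of paths (concatenation, left to right; zero if not composable) *)
Definition pmul (p q : qpath) : Alg :=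
  if pend p == q.1 then << (p.1, (p.2 + q.2)%N) >> else 0.

Definition amul (a b : Alg) : Alg := bilext pmul a b.

Definition tens (a b : Alg) : Alg2 := bilext (fun p q => << (p, q) >>) a b.
Definition tens21 (d : Alg2) (c : Alg) : Alg3 :=
  bilext (fun pq r => << (pq.1, pq.2, r) >>) d c.
Definition tens3 (a b c : Alg) : Alg3 := tens21 (tens a b) c.

Definition lact (x : Alg) (d : Alg2) : Alg2 :=
  linext (fun pq => tens (amul x << pq.1 >>) << pq.2 >>) d.
Definition ract (d : Alg2) (y : Alg) : Alg2 :=
  linext (fun pq => tens << pq.1 >> (amul << pq.2 >> y)) d.

Definition swap2 (d : Alg2) : Alg2 := linext (fun pq => << (pq.2, pq.1) >>) d.

Definition tau3 (u : Alg3) : Alg3 :=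
  linext (fun x => << (x.2, x.1.1, x.1.2) >>) u.

Definition e1 : Alg := << (false, 0%N) >>.
Definition e2 : Alg := << (true, 0%N) >>.
Definition tA : Alg := << (false, 1%N) >>.
Definition sA : Alg := << (true, 1%N) >>.

Definition is_B_double_bracket (br : Alg -> Alg -> Alg2) : Prop :=
  [/\ forall (k : F) a b c, br (k *: a + b) c = k *: br a c + br b c,
      forall (k : F) a b c, br a (k *: b + c) = k *: br a b + br a c,
      forall (c1 c2 : F) a,
        br (c1 *: e1 + c2 *: e2) a = 0 /\ br a (c1 *: e1 + c2 *: e2) = 0,
      forall a b, br a b = - swap2 (br b a) &
      forall a b c, br a (amul b c) = ract (br a b) c + lact b (br a c)].

(* {{a, d'}} (x) d''  for d = d' (x) d'' (Sweedler), extended linearly in d *)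
Definition brL (br : Alg -> Alg -> Alg2) (a : Alg) (d : Alg2) : Alg3 :=
  linext (fun pq => tens21 (br a << pq.1 >>) << pq.2 >>) d.

Definition triple_bracket (br : Alg -> Alg -> Alg2) (a b c : Alg) : Alg3 :=
  brL br a (br b c) + tau3 (brL br b (br c a))
  + tau3 (tau3 (brL br c (br a b))).

Local Notation "x *a y" := (amul x y) (at level 40, left associativity).

Definition qP_rhs (a b c : Alg) : Alg3 :=
  (4%:R : F)^-1 *: \sum_(e <- [:: e1; e2])
    (  tens3 (c *a e *a a) (e *a b) e
     - tens3 (c *a e *a a) e (b *a e)
     - tens3 (c *a e) (a *a e *a b) e
     + tens3 (c *a e) (a *a e) (b *a e)
     - tens3 (e *a a) (e *a b) (e *a c)
     + tens3 (e *a a) e (b *a e *a c)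
     + tens3 e (a *a e *a b) (e *a c)
     - tens3 e (a *a e) (b *a e *a c)).

Definition quasi_Poisson (br : Alg -> Alg -> Alg2) : Prop :=
  forall a b c, triple_bracket br a b c = qP_rhs a b c.

(* each homogeneous component (|s| = |t| = 1, total degree on A (x) A)
   has degree at most 4 *)
Definition deg_le4 (d : Alg2) : Prop :=
  forall pq, pq \in msupp d -> (pq.1.2 + pq.2.2 <= 4)%N.

End PathAlgebra.

Arguments e1 {F}. Arguments e2 {F}. Arguments tA {F}. Arguments sA {F}.

(* Main.v *)
Require Import Defs.
From HB Require Import structures.
From mathcomp Require Import all_boot all_order all_algebra.
From mathcomp Require Import finmap monalg.
From mathcomp.algebra_tactics Require Import ring.
From mathcomp Require Import zify.
Import GRing.Theory.
Local Open Scope ring_scope.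

Set Implicit Arguments. Unset Strict Implicit. Unset Printing Implicit Defensive.

Section Calc.
Variable F : fieldType.

Definition interp (K : choiceType) (l : seq (F * K)) : @malg K F :=
  \sum_(x <- l) x.1 *: << x.2 >>.

Lemma interp_nil (K : choiceType) : interp (K:=K) [::] = 0.
Proof. by rewrite /interp big_nil. Qed.

Lemma interp_cons (K : choiceType) x (l : seq (F * K)) :
  interp (x :: l) = x.1 *: << x.2 >> + interp l.
Proof. by rewrite /interp big_cons. Qed.

Lemma interp_cat (K : choiceType) (l1 l2 : seq (F * K)) :
  interp (l1 ++ l2) = interp l1 + interp l2.
Proof. by rewrite /interp big_cat. Qed.

Definition lsc (K : choiceType) (c : F) (l : seq (F * K)) :=
  map (fun x => (c * x.1, x.2)) l.

Lemma interp_lsc (K : choiceType) c (l : seq (F * K)) :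
  interp (lsc c l) = c *: interp l.
Proof.
rewrite /interp /lsc big_map scaler_sumr; apply: eq_bigr => x _.
by rewrite scalerA.
Qed.

Lemma interp1 (K : choiceType) (k : K) : interp [:: (1, k)] = << k >>.
Proof. by rewrite interp_cons interp_nil scale1r addr0. Qed.

Lemma monalgUZ (K : choiceType) (c : F) (k : K) : << c *g k >> = c *: << k >>.
Proof.
apply/malgP => k'; rewrite mcoeffZ !mcoeffU.
by case: (k == k'); rewrite ?mulr1n ?mulr0n ?mulr1 ?mulr0.
Qed.

Section Lin.
Variables X Z : choiceType.
Implicit Types f : X -> @malg Z F.

Lemma linext_w f (a : @malg X F) (D : {fset X}) : (msupp a `<=` D)%fset ->
  linext f a = \sum_(x <- D) a@_x *: f x.
Proof.
move=> sD; rewrite /linext; apply: big_fset_incl => // x _ xn.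
by rewrite mcoeff_outdom // scale0r.
Qed.

Lemma linextD f a b : linext f (a + b) = linext f a + linext f b.
Proof.
rewrite (@linext_w f (a + b) (msupp a `|` msupp b)%fset) ?msuppD_le //.
rewrite (@linext_w f a (msupp a `|` msupp b)%fset) ?fsubsetUl //.
rewrite (@linext_w f b (msupp a `|` msupp b)%fset) ?fsubsetUr //.
by rewrite -big_split /=; apply: eq_bigr => x _; rewrite mcoeffD scalerDl.
Qed.

Lemma linextZ f c a : linext f (c *: a) = c *: linext f a.
Proof.
rewrite (@linext_w f (c *: a) (msupp a)) ?msuppZ_le // /linext scaler_sumr.
by apply: eq_bigr => x _; rewrite mcoeffZ scalerA.
Qed.

Lemma linext0 f : linext f 0 = 0.
Proof. by rewrite /linext msupp0 big_seq_fset0. Qed.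

Lemma linextU f x : linext f << x >> = f x.
Proof.
by rewrite /linext msuppU oner_eq0 big_seq_fset1 mcoeffUU scale1r.
Qed.

Lemma linext_interp f l : linext f (interp l) = \sum_(y <- l) y.1 *: f y.2.
Proof.
elim: l => [|y l IH]; first by rewrite interp_nil linext0 big_nil.
by rewrite interp_cons linextD linextZ linextU IH big_cons.
Qed.

Definition llin (g : X -> seq (F * Z)) (l : seq (F * X)) :=
  flatten [seq lsc y.1 (g y.2) | y <- l].

Lemma linextI f g l : (forall x, f x = interp (g x)) ->
  linext f (interp l) = interp (llin g l).
Proof.
move=> fg; rewrite linext_interp; elim: l => [|y l IH].
  by rewrite big_nil /llin /= interp_nil.
by rewrite big_cons IH /llin /= interp_cat interp_lsc fg.
Qed.

Lemma coef_linext f d k :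
  (linext f d)@_k = \sum_(z <- msupp d) d@_z * (f z)@_k.
Proof.
rewrite /linext raddf_sum; apply: eq_bigr => z _; exact: mcoeffZ.
Qed.
End Lin.

Lemma bilext_lin (X Y Z : choiceType) (f : X -> Y -> @malg Z F) a b :
  bilext f a b = linext (fun x => linext (f x) b) a.
Proof.
rewrite /bilext /linext; apply: eq_bigr => x _; rewrite scaler_sumr.
by apply: eq_bigr => y _; rewrite scalerA.
Qed.

Definition lbil (X Y Z : choiceType) (g : X -> Y -> seq (F * Z)) l1 l2 :=
  llin (fun x => llin (g x) l2) l1.

Lemma bilextI (X Y Z : choiceType) (f : X -> Y -> @malg Z F) g l1 l2 :
  (forall x y, f x y = interp (g x y)) ->
  bilext f (interp l1) (interp l2) = interp (lbil g l1 l2).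
Proof.
move=> fg; rewrite bilext_lin; apply: linextI => x; exact: linextI.
Qed.

Lemma bilextUU (X Y Z : choiceType) (f : X -> Y -> @malg Z F) x y :
  bilext f << x >> << y >> = f x y.
Proof. by rewrite bilext_lin !linextU. Qed.

Lemma sum_delta (K : choiceType) (r : seq K) (g : K -> F) k : uniq r ->
  \sum_(z <- r) g z * (z == k)%:R = if k \in r then g k else 0.
Proof.
move=> ur; case: ifP => kr.
  rewrite (bigD1_seq k) //= eqxx mulr1 big1 ?addr0 // => z /negbTE ->.
  by rewrite mulr0.
rewrite big1_seq // => z /andP[_ zr]; case: eqP => [zk|]; last by rewrite mulr0.
by move: kr; rewrite -zk zr.
Qed.

Lemma sum_supp_delta (K : choiceType) (d : @malg K F) k W :
  \sum_(z <- msupp d) d@_z * ((z == k)%:R * W) = d@_k * W.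
Proof.
under eq_bigr => z _ do rewrite mulrA.
rewrite -mulr_suml sum_delta ?fset_uniq //.
by case: ifP => // /negbT kd; rewrite mcoeff_outdom // mul0r.
Qed.

Lemma coefU (K : choiceType) (x k : K) : (<< x >> : @malg K F)@_k = (x == k)%:R.
Proof. by rewrite mcoeffU. Qed.


Definition lpmul (p q : qpath) : seq (F * qpath) :=
  if Bool.eqb (pend p) q.1 then [:: (1, (p.1, Nat.add p.2 q.2))] else [::].

Lemma pmulI p q : pmul F p q = interp (lpmul p q).
Proof.
rewrite /pmul /lpmul; case: (pend p); case: q.1 => /=;
by rewrite ?interp1 ?interp_nil.
Qed.

Lemma amulUU p q : amul << p >> << q >> = pmul F p q.
Proof. by rewrite /amul bilextUU. Qed.

Definition lamul l1 l2 := lbil lpmul l1 l2.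
Lemma amulI l1 l2 : amul (interp l1) (interp l2) = interp (lamul l1 l2).
Proof. by apply: bilextI => x y; exact: pmulI. Qed.

Definition ltens (l1 l2 : seq (F * qpath)) :=
  lbil (fun p q => [:: (1, (p, q))]) l1 l2.
Lemma tensI l1 l2 : tens (interp l1) (interp l2) = interp (ltens l1 l2).
Proof. by apply: bilextI => x y; rewrite interp1. Qed.
Lemma tensUU p q : tens (F:=F) << p >> << q >> = << (p, q) >>.
Proof. by rewrite /tens bilextUU. Qed.

Definition ltens21 (d : seq (F * (qpath * qpath))) (c : seq (F * qpath)) :=
  lbil (fun pq r => [:: (1, (pq.1, pq.2, r))]) d c.
Lemma tens21I l1 l2 : tens21 (interp l1) (interp l2) = interp (ltens21 l1 l2).
Proof. by apply: bilextI => x y; rewrite interp1. Qed.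

Definition llact lx ld :=
  llin (fun pq : qpath * qpath => ltens (lamul lx [:: (1, pq.1)]) [:: (1, pq.2)]) ld.
Lemma lactI lx ld : lact (interp lx) (interp ld) = interp (llact lx ld).
Proof. by apply: linextI => x; rewrite -!interp1 amulI tensI. Qed.

Definition lract ld ly :=
  llin (fun pq : qpath * qpath => ltens [:: (1, pq.1)] (lamul [:: (1, pq.2)] ly)) ld.
Lemma ractI ld ly : ract (interp ld) (interp ly) = interp (lract ld ly).
Proof. by apply: linextI => x; rewrite -!interp1 amulI tensI. Qed.

Definition lswap (l : seq (F * (qpath * qpath))) :=
  llin (fun pq : qpath * qpath => [:: (1, (pq.2, pq.1))]) l.
Lemma swap2I l : swap2 (interp l) = interp (lswap l).
Proof. by apply: linextI => x; rewrite interp1. Qed.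

Definition ltau (l : seq (F * (qpath * qpath * qpath))) :=
  llin (fun x : qpath * qpath * qpath => [:: (1, (x.2, x.1.1, x.1.2))]) l.
Lemma tau3I l : tau3 (interp l) = interp (ltau l).
Proof. by apply: linextI => x; rewrite interp1. Qed.

Lemma brLI br a (BR : qpath -> seq (F * (qpath * qpath))) ld :
  (forall p, br a << p >> = interp (BR p)) ->
  brL br a (interp ld) =
  interp (llin (fun pq : qpath * qpath => ltens21 (BR pq.1) [:: (1, pq.2)]) ld).
Proof. by move=> HB; apply: linextI => x; rewrite HB -interp1 tens21I. Qed.

Definition qeq (p q : qpath) := Bool.eqb p.1 q.1 && eqn p.2 q.2.
Definition keq3 (x y : qpath * qpath * qpath) :=
  [&& qeq x.1.1 y.1.1, qeq x.1.2 y.1.2 & qeq x.2 y.2].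

Lemma qeqE p q : qeq p q = (p == q).
Proof.
case: p q => [b n] [c m]; rewrite /qeq /= xpair_eqE.
have -> : Bool.eqb b c = (b == c) by case: b; case: c.
by [].
Qed.

Lemma keq3E x y : keq3 x y = (x == y).
Proof.
case: x y => [[x1 x2] x3] [[y1 y2] y3].
by rewrite /keq3 /= !qeqE !xpair_eqE andbA.
Qed.

Definition lcoef (K : choiceType) (eqk : K -> K -> bool) (k : K) (l : seq (F * K)) :=
  foldr (fun x acc => (if eqk x.2 k then x.1 else 0) + acc) 0 l.

Lemma coef_interp (K : choiceType) (eqk : K -> K -> bool) k l :
  (forall x y, eqk x y = (x == y)) -> (interp l)@_k = lcoef eqk k l.
Proof.
move=> HE; elim: l => [|x l IH]; first by rewrite interp_nil mcoeff0.
rewrite interp_cons mcoeffD mcoeffZ coefU IH /= HE.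
by case: (x.2 == k); rewrite ?mulr1 ?mulr0.
Qed.

End Calc.

Section Br.
Variable F : fieldType.
Variables l m c00 c10 c01 c20 c11 c02 : F.

Definition kE1 : qpath := (false, 0%N).
Definition kE2 : qpath := (true, 0%N).
Definition kT : qpath := (false, 1%N).
Definition kS : qpath := (true, 1%N).
Definition kST : qpath := (true, 2%N).
Definition kTS : qpath := (false, 2%N).
Definition kTST : qpath := (false, 3%N).
Definition kSTS : qpath := (true, 3%N).
Definition kSTST : qpath := (true, 4%N).
Definition kTSTS : qpath := (false, 4%N).

Definition GTS : seq (F * (qpath * qpath)) :=
  [:: (c00, (kE2, kE1)); (c10, (kST, kE1)); (c01, (kE2, kTS));
      (c20, (kSTST, kE1)); (c11, (kST, kTS)); (c02, (kE2, kTSTS))].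

Definition GL (a b : bool) : seq (F * (qpath * qpath)) :=
  match a, b with
  | false, false => [:: (l, (kTST, kT)); (- l, (kT, kTST))]
  | true, true => [:: (m, (kSTS, kS)); (- m, (kS, kSTS))]
  | false, true => GTS
  | true, false => lsc (-1) (lswap GTS)
  end.

Fixpoint BRn (a : bool) (v : bool) (n : nat) : seq (F * (qpath * qpath)) :=
  match n with
  | 0%N => [::]
  | n'.+1 => lract (BRn a v n') [:: (1, (pend (v, n'), 1%N))]
             ++ llact [:: (1, (v, n'))] (GL a (pend (v, n')))
  end.

Definition lbrl (a : bool) (ld : seq (F * (qpath * qpath))) :=
  llin (fun pq : qpath * qpath => ltens21 (BRn a pq.1.1 pq.1.2) [:: (1, pq.2)]) ld.

Definition TRL (a b c : bool) :=
  lbrl a (GL b c) ++ ltau (lbrl b (GL c a)) ++ ltau (ltau (lbrl c (GL a b))).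

Definition lt3 (x y z : seq (F * qpath)) := ltens21 (ltens x y) z.

Definition QRe (a b c e : seq (F * qpath)) :=
  let M := @lamul F in
  lt3 (M (M c e) a) (M e b) e ++ lsc (-1) (lt3 (M (M c e) a) e (M b e))
  ++ lsc (-1) (lt3 (M c e) (M (M a e) b) e) ++ lt3 (M c e) (M a e) (M b e)
  ++ lsc (-1) (lt3 (M e a) (M e b) (M e c)) ++ lt3 (M e a) e (M (M b e) c)
  ++ lt3 e (M (M a e) b) (M e c) ++ lsc (-1) (lt3 e (M a e) (M (M b e) c)).

Definition QRL (a b c : qpath) :=
  lsc (4%:R^-1) (QRe [:: (1, a)] [:: (1, b)] [:: (1, c)] [:: (1, kE1)]
                 ++ QRe [:: (1, a)] [:: (1, b)] [:: (1, c)] [:: (1, kE2)]).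

Variable br : Alg F -> Alg F -> Alg2 F.
Hypothesis HB : is_B_double_bracket br.
Hypothesis HG : forall a b : bool, br << (a, 1%N) >> << (b, 1%N) >> = interp (GL a b).

Lemma br_idem x v : br x << (v, 0%N) >> = 0.
Proof.
case: HB => _ _ Hv _ _.
case: v.
  by have [_ ] := Hv 0 1 x; rewrite scale0r add0r scale1r.
by have [_ ] := Hv 1 0 x; rewrite scale0r addr0 scale1r.
Qed.

Lemma BRP a p : br << (a, 1%N) >> << p >> = interp (BRn a p.1 p.2).
Proof.
case: p => v n /=; elim: n => [|n IH] /=; first by rewrite br_idem interp_nil.
have -> : << (v, n.+1) >> = amul << (v, n) >> << (pend (v, n), 1%N) >> :> Alg F.
  by rewrite amulUU /pmul eqxx /= addn1.
case: HB => _ _ _ _ HL.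
by rewrite HL IH HG -!interp1 ractI lactI interp_cat.
Qed.

Lemma tripleI a b c :
  triple_bracket br << (a, 1%N) >> << (b, 1%N) >> << (c, 1%N) >> = interp (TRL a b c).
Proof.
have HB' : forall a', forall p, br << (a', 1%N) >> << p >> = interp ((fun p => BRn a' p.1 p.2) p).
  move=> a' p; exact: BRP.
rewrite /triple_bracket /TRL !HG !(brLI _ (HB' _)) !tau3I !interp_cat addrA.
by [].
Qed.

End Br.

Section Q.
Variable F : fieldType.
Local Notation "x *a y" := (amul x y) (at level 40, left associativity).
Lemma QReI (a b c e : seq (F * qpath)) :
  let a' := interp a in let b' := interp b in let c' := interp c in let e' := interp e in
    (  tens3 (c' *a e' *a a') (e' *a b') e'
     - tens3 (c' *a e' *a a') e' (b' *a e')
     - tens3 (c' *a e') (a' *a e' *a b') e'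
     + tens3 (c' *a e') (a' *a e') (b' *a e')
     - tens3 (e' *a a') (e' *a b') (e' *a c')
     + tens3 (e' *a a') e' (b' *a e' *a c')
     + tens3 e' (a' *a e' *a b') (e' *a c')
     - tens3 e' (a' *a e') (b' *a e' *a c')) = interp (QRe a b c e).
Proof.
move=> a' b' c' e'; rewrite /a' /b' /c' /e' /QRe /lt3 /tens3.
rewrite !amulI.
rewrite !tensI !tens21I.
rewrite !interp_cat !interp_lsc !scaleN1r.
by rewrite !addrA.
Qed.
End Q.
Lemma qrhsI (F : fieldType) a b c :
  qP_rhs (F:=F) << a >> << b >> << c >> = interp (QRL F a b c).
Proof.
rewrite /qP_rhs.
rewrite /QRL.
rewrite big_cons.
rewrite big_seq1.
rewrite /e1 /e2.
rewrite -[<< a >>]interp1 -[<< b >>]interp1 -[<< c >>]interp1.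
rewrite -[<< (false, 0%N) >>]interp1 -[<< (true, 0%N) >>]interp1.
rewrite interp_lsc interp_cat -!QReI.
by [].
Qed.

Section Struct.
Variable F : fieldType.

Lemma tens0l (b : Alg F) : tens 0 b = 0.
Proof. by rewrite /tens bilext_lin linext0. Qed.
Lemma tens0r p : tens (F:=F) << p >> 0 = 0.
Proof. by rewrite /tens bilext_lin linextU linext0. Qed.
Lemma ract0 (y : Alg F) : ract 0 y = 0.
Proof. exact: linext0. Qed.
Lemma lact0 (x : Alg F) : lact x 0 = 0.
Proof. exact: linext0. Qed.

Lemma lact_e v (d : Alg2 F) k :
  (lact << (v, 0%N) >> d)@_k = d@_k * (v == k.1.1)%:R.
Proof.
rewrite /lact coef_linext -(sum_supp_delta d k ((v == k.1.1)%:R)).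
apply: eq_bigr => [[[b n] q]] _ /=; congr (_ * _).
rewrite amulUU /pmul /=.
case: (eqVneq v b) => [<-|vb].
  rewrite add0n tensUU coefU.
  by case: eqP => [<-|]; rewrite ?eqxx ?mulr1 ?mul0r.
rewrite tens0l mcoeff0.
by case: eqP => [<-|] /=; rewrite ?(negbTE vb) ?mulr0 ?mul0r.
Qed.

Lemma ract_e w (d : Alg2 F) k :
  (ract d << (w, 0%N) >>)@_k = d@_k * (pend k.2 == w)%:R.
Proof.
rewrite /ract coef_linext -(sum_supp_delta d k ((pend k.2 == w)%:R)).
apply: eq_bigr => [[p [b n]]] _ /=; congr (_ * _).
rewrite amulUU /pmul /=.
case: (eqVneq (pend (b, n)) w) => [<-|vb].
  rewrite addn0 tensUU coefU.
  by case: eqP => [<-|]; rewrite ?eqxx ?mulr1 ?mul0r.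
rewrite tens0r mcoeff0.
by case: eqP => [<-|] /=; rewrite ?(negbTE vb) ?mulr0 ?mul0r.
Qed.

Lemma swap_coef (d : Alg2 F) k : (swap2 d)@_k = d@_(k.2, k.1).
Proof.
rewrite /swap2 coef_linext -[RHS]mulr1 -(sum_supp_delta d (k.2, k.1) 1).
apply: eq_bigr => [[p q]] _ /=; congr (_ * _).
rewrite coefU mulr1; case: k => a b /=.
by rewrite !xpair_eqE andbC.
Qed.

Lemma interp_supp (K : choiceType) (d : @malg K F) (S : seq K) : uniq S ->
  (forall k, d@_k != 0 -> k \in S) -> d = interp [seq (d@_z, z) | z <- S].
Proof.
move=> uS HS; apply/malgP => k; symmetry.
rewrite /interp raddf_sum big_map.
transitivity (\sum_(z <- S) d@_z * (z == k)%:R).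
  by apply: eq_bigr => z _ /=; rewrite -coefU; exact: mcoeffZ.
rewrite (sum_delta (fun z => d@_z)) //; case: ifP => // kS.
by apply/esym/eqP; exact: (contraFT (@HS k) kS).
Qed.

Variable br : Alg F -> Alg F -> Alg2 F.
Hypothesis HB : is_B_double_bracket br.

Lemma br_left a b v : amul << (v, 0%N) >> b = b ->
  forall k, (br a b)@_k != 0 -> k.1.1 = v.
Proof.
move=> Hb k; case: HB => _ _ _ _ HL.
have := HL a << (v, 0%N) >> b; rewrite Hb br_idem // ract0 add0r => ->.
by rewrite lact_e; case: (v =P k.1.1) => [->//|_]; rewrite mulr0 eqxx.
Qed.

Lemma br_right a b w : amul b << (w, 0%N) >> = b ->
  forall k, (br a b)@_k != 0 -> pend k.2 = w.
Proof.
move=> Hb k; case: HB => _ _ _ _ HL.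
have := HL a b << (w, 0%N) >>; rewrite Hb br_idem // lact0 addr0 => ->.
by rewrite ract_e; case: (pend k.2 =P w) => [->//|_]; rewrite mulr0 eqxx.
Qed.

Lemma br_anti a b k : (br a b)@_k = - (br b a)@_(k.2, k.1).
Proof. by case: HB => _ _ _ HA _; rewrite HA mcoeffN swap_coef. Qed.

End Struct.

Section Struct2.
Variable F : fieldType.
Hypothesis charF0 : [pchar F] =i pred0.
Variable br : Alg F -> Alg F -> Alg2 F.
Hypothesis HB : is_B_double_bracket br.
Hypothesis Dss : deg_le4 (br sA sA).
Hypothesis Dtt : deg_le4 (br tA tA).
Hypothesis Dts : deg_le4 (br tA sA).

Lemma e1t : amul << kE1 >> tA = tA :> Alg F. Proof. by rewrite amulUU. Qed.
Lemma te2 : amul tA << kE2 >> = tA :> Alg F. Proof. by rewrite amulUU. Qed.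
Lemma e2s : amul << kE2 >> sA = sA :> Alg F. Proof. by rewrite amulUU. Qed.
Lemma se1 : amul sA << kE1 >> = sA :> Alg F. Proof. by rewrite amulUU. Qed.

Definition STSk : seq (qpath * qpath) :=
  [:: (kE2, kE1); (kST, kE1); (kE2, kTS); (kSTST, kE1); (kST, kTS); (kE2, kTSTS)].

Lemma supp_ts k : (br tA sA)@_k != 0 -> k \in STSk.
Proof.
move=> nz.
have h1 := br_left HB e2s nz.
have h2 := br_right HB se1 nz.
have nz' : (br sA tA)@_(k.2, k.1) != 0 by move: nz; rewrite (br_anti HB) oppr_eq0.
have h3 := br_left HB e1t nz'.
have h4 := br_right HB te2 nz'.
have h5 := Dts (pq := k); rewrite -mcoeff_neq0 in h5; have {}h5 := h5 nz.
clear nz'; move: k nz h1 h3 h2 h4 h5 => [[b1 n1] [b2 n2]] /= _ -> -> h2 h4 h5.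
have o1 : odd n1 = false by move: h4; rewrite /pend /=; case: (odd n1).
have o2 : odd n2 = false by move: h2; rewrite /pend /=; case: (odd n2).
clear h2 h4; case: n1 o1 h5 => [|[|[|[|[|n1]]]]] o1 h5; case: n2 o2 h5 => [|[|[|[|[|n2]]]]] o2 h5;
  try discriminate; try lia; by [].
Qed.


Lemma supp_tt k : (br tA tA)@_k != 0 -> k \in [:: (kT, kT); (kTST, kT); (kT, kTST)].
Proof.
move=> nz.
have h1 := br_left HB e1t nz.
have h2 := br_right HB te2 nz.
have nz' : (br tA tA)@_(k.2, k.1) != 0 by move: nz; rewrite (br_anti HB) oppr_eq0.
have h3 := br_left HB e1t nz'.
have h4 := br_right HB te2 nz'.
have h5 := Dtt (pq := k); rewrite -mcoeff_neq0 in h5; have {}h5 := h5 nz.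
clear nz'; move: k nz h1 h3 h2 h4 h5 => [[b1 n1] [b2 n2]] /= _ -> -> h2 h4 h5.
have o1 : odd n1 = true by move: h4; rewrite /pend /=; case: (odd n1).
have o2 : odd n2 = true by move: h2; rewrite /pend /=; case: (odd n2).
clear h2 h4; case: n1 o1 h5 => [|[|[|[|[|n1]]]]] o1 h5; case: n2 o2 h5 => [|[|[|[|[|n2]]]]] o2 h5;
  try discriminate; try lia; by [].
Qed.

Lemma supp_ss k : (br sA sA)@_k != 0 -> k \in [:: (kS, kS); (kSTS, kS); (kS, kSTS)].
Proof.
move=> nz.
have h1 := br_left HB e2s nz.
have h2 := br_right HB se1 nz.
have nz' : (br sA sA)@_(k.2, k.1) != 0 by move: nz; rewrite (br_anti HB) oppr_eq0.
have h3 := br_left HB e2s nz'.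
have h4 := br_right HB se1 nz'.
have h5 := Dss (pq := k); rewrite -mcoeff_neq0 in h5; have {}h5 := h5 nz.
clear nz'; move: k nz h1 h3 h2 h4 h5 => [[b1 n1] [b2 n2]] /= _ -> -> h2 h4 h5.
have o1 : odd n1 = true by move: h4; rewrite /pend /=; case: (odd n1).
have o2 : odd n2 = true by move: h2; rewrite /pend /=; case: (odd n2).
clear h2 h4; case: n1 o1 h5 => [|[|[|[|[|n1]]]]] o1 h5; case: n2 o2 h5 => [|[|[|[|[|n2]]]]] o2 h5;
  try discriminate; try lia; by [].
Qed.

Lemma shape_ts : br tA sA = interp (GTS (br tA sA)@_(kE2, kE1) (br tA sA)@_(kST, kE1)
  (br tA sA)@_(kE2, kTS) (br tA sA)@_(kSTST, kE1) (br tA sA)@_(kST, kTS)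
  (br tA sA)@_(kE2, kTSTS)).
Proof. by rewrite {1}(interp_supp _ supp_ts). Qed.

Lemma self_anti0 a p : (br a a)@_(p, p) = 0.
Proof.
have /= := br_anti HB a a (p, p).
move/eqP; rewrite -addr_eq0 -mulr2n -mulr_natl mulf_eq0.
by move/pcharf0P: charF0 => ->; case/orP => // /eqP.
Qed.

Lemma shape_tt : br tA tA =
  interp [:: ((br tA tA)@_(kTST, kT), (kTST, kT)); (- (br tA tA)@_(kTST, kT), (kT, kTST))].
Proof.
rewrite {1}(interp_supp _ supp_tt) // /= (self_anti0 tA kT).
rewrite (br_anti HB tA tA (kT, kTST)) /=.
by rewrite interp_cons scale0r add0r.
Qed.

Lemma shape_ss : br sA sA =
  interp [:: ((br sA sA)@_(kSTS, kS), (kSTS, kS)); (- (br sA sA)@_(kSTS, kS), (kS, kSTS))].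
Proof.
rewrite {1}(interp_supp _ supp_ss) // /= (self_anti0 sA kS).
rewrite (br_anti HB sA sA (kS, kSTS)) /=.
by rewrite interp_cons scale0r add0r.
Qed.

End Struct2.

Section Forms.
Variable F : fieldType.

Lemma st_eq : amul sA tA = << kST >> :> Alg F. Proof. by rewrite amulUU /pmul /=. Qed.
Lemma ts_eq : amul tA sA = << kTS >> :> Alg F. Proof. by rewrite amulUU /pmul /=. Qed.
Lemma tst_eq : amul (amul tA sA) tA = << kTST >> :> Alg F.
Proof. by rewrite ts_eq amulUU /pmul /=. Qed.
Lemma sts_eq : amul (amul sA tA) sA = << kSTS >> :> Alg F.
Proof. by rewrite st_eq amulUU /pmul /=. Qed.

Lemma interp_cons1 (K : choiceType) (x : F * K) : interp [:: x] = x.1 *: << x.2 >>.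
Proof. by rewrite /interp big_seq1. Qed.

Lemma GTS_exp (a b c d e f : F) : interp (GTS a b c d e f) =
  a *: << (kE2, kE1) >> + (b *: << (kST, kE1) >> + (c *: << (kE2, kTS) >>
  + (d *: << (kSTST, kE1) >> + (e *: << (kST, kTS) >> + f *: << (kE2, kTSTS) >>)))).
Proof. by rewrite /GTS 5!interp_cons interp_cons1. Qed.

Lemma lin_std (V : lmodType F) (X1 X2 X3 X4 X5 X6 : V) (a : F) :
  0 *: X1 + (a *: X2 + ((- a) *: X3 + (0 *: X4 + (0 *: X5 + 0 *: X6)))) = a *: (X2 - X3).
Proof. by rewrite !scale0r !addr0 add0r scalerBr scaleNr. Qed.

Lemma lin_1b (V : lmodType F) (X1 X2 X3 X4 X5 X6 : V) (g a p : F) :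
  g *: X1 + (a *: X2 + (a *: X3 + (0 *: X4 + (p *: X5 + 0 *: X6)))) =
  g *: X1 + p *: X5 + a *: (X2 + X3).
Proof.
rewrite !scale0r !addr0 add0r scalerDr.
by rewrite -!addrA; congr (_ + _); rewrite [RHS]addrC -addrA.
Qed.

Lemma lin_tt (V : lmodType F) (X1 X2 : V) (x : F) :
  x *: X1 + (- x) *: X2 = x *: (X1 - X2).
Proof. by rewrite scalerBr scaleNr. Qed.

Lemma form_std (a : F) : interp (GTS 0 a (- a) 0 0 0) =
  a *: (tens (amul sA tA) e1 - tens e2 (amul tA sA)).
Proof. by rewrite GTS_exp st_eq ts_eq /e1 /e2 !tensUU lin_std. Qed.

Lemma form_1b (g a p : F) : interp (GTS g a a 0 p 0) =
  g *: tens e2 e1 + p *: tens (amul sA tA) (amul tA sA)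
  + a *: (tens (amul sA tA) e1 + tens e2 (amul tA sA)).
Proof. by rewrite GTS_exp st_eq ts_eq /e1 /e2 !tensUU lin_1b. Qed.

Lemma form_tt (x : F) : interp [:: (x, (kTST, kT)); (- x, (kT, kTST))] =
  x *: (tens (amul (amul tA sA) tA) tA - tens tA (amul (amul tA sA) tA)).
Proof. by rewrite tst_eq /tA !tensUU interp_cons interp_cons1 lin_tt. Qed.

Lemma form_ss (x : F) : interp [:: (x, (kSTS, kS)); (- x, (kS, kSTS))] =
  x *: (tens (amul (amul sA tA) sA) sA - tens sA (amul (amul sA tA) sA)).
Proof. by rewrite sts_eq /sA !tensUU interp_cons interp_cons1 lin_tt. Qed.

Lemma form_zero (p q : qpath * qpath) : interp [:: (0 : F, p); (- 0, q)] = 0.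
Proof. by rewrite interp_cons interp_cons1 oppr0 !scale0r addr0. Qed.

Lemma half_cases (x : F) : (2%:R : F) != 0 -> x * x = 4%:R^-1 ->
  x = 2%:R^-1 \/ x = - 2%:R^-1.
Proof.
move=> h2 E.
have h4 : (4%:R : F)^-1 = 2%:R^-1 * 2%:R^-1 by rewrite -invfM -natrM.
have : (x - 2%:R^-1) * (x + 2%:R^-1) = 0.
  by rewrite mulrDr !mulrBl E h4; ring.
by move/eqP; rewrite mulf_eq0 subr_eq0 addr_eq0 => /orP[/eqP|/eqP]; [left|right].
Qed.

Lemma eq_sub (x y z : F) : x = y -> z = x - y -> z = 0.
Proof. by move=> -> ->; rewrite subrr. Qed.

Lemma from0 (a b c : F) : a = 0 -> b = c * a -> b = 0.
Proof. by move=> -> ->; rewrite mulr0. Qed.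

End Forms.

Ltac kcH H := cbv [lcoef keq3 qeq TRL lbrl llin lsc lswap ltau ltens21 ltens lbil lamul lpmul lract llact BRn GL GTS pend QRL QRe lt3 flatten map foldr cat fst snd Bool.eqb eqn andb negb odd Nat.add kE1 kE2 kT kS kST kTS kTST kSTS kSTST kTSTS] in H.

Ltac geteq HqP HB HG a b c k :=
  let E := fresh "E" in let H := fresh "H" in
  have E := HqP << (a, 1%N) >> << (b, 1%N) >> << (c, 1%N) >>;
  rewrite (tripleI HB HG) qrhsI in E;
  have H := congr1 (mcoeff k) E; clear E;
  rewrite !(coef_interp _ _ keq3E) in H; kcH H; apply: (eq_sub H); ring.

Unset Implicit Arguments. Set Strict Implicit.

Theorem proposition4p4 (F : fieldType) (charF0 : [pchar F] =i pred0)
  (br : Alg F -> Alg F -> Alg2 F) :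
  is_B_double_bracket br -> quasi_Poisson br ->
  deg_le4 (br sA sA) -> deg_le4 (br tA tA) -> deg_le4 (br tA sA) ->
  let st := amul sA tA in let ts := amul tA sA in
  let tst := amul (amul tA sA) tA in let sts := amul (amul sA tA) sA in
  let half := (2%:R : F)^-1 in
  let bts_std := exists delta : F, (delta = 1 \/ delta = -1) /\
      br tA sA = (delta * half) *: (tens st e1 - tens e2 ts) in
  (* Case 1 *)
  (br sA sA = 0 /\ br tA tA = 0 /\
    (bts_std \/
     exists alpha gamma phi : F, alpha ^+ 2 = (4%:R : F)^-1 + gamma * phi /\
       br tA sA = gamma *: tens e2 e1 + phi *: tens st ts
                  + alpha *: (tens st e1 + tens e2 ts)))
  \/
  (* Case 2 *)
  (br sA sA = 0 /\
    (exists lambda : F, lambda != 0 /\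
       br tA tA = lambda *: (tens tst tA - tens tA tst)) /\ bts_std)
  \/
  (* Case 3 *)
  (br tA tA = 0 /\
    (exists lambda : F, lambda != 0 /\
       br sA sA = lambda *: (tens sts sA - tens sA sts)) /\ bts_std).
Proof.
move=> HB HqP Dss Dtt Dts st ts tst sts half bts_std.
subst st ts tst sts half bts_std.
have Htt := shape_tt charF0 HB Dtt.
have Hss := shape_ss charF0 HB Dss.
have Hts := shape_ts HB Dts.
have Hst : br sA tA = - swap2 (br tA sA) by case: HB => _ _ _ HA _; exact: HA.
set l := (br tA tA)@_(kTST, kT) in Htt.
set m := (br sA sA)@_(kSTS, kS) in Hss.
set c00 := (br tA sA)@_(kE2, kE1) in Hts.
set c10 := (br tA sA)@_(kST, kE1) in Hts.
set c01 := (br tA sA)@_(kE2, kTS) in Hts.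
set c20 := (br tA sA)@_(kSTST, kE1) in Hts.
set c11 := (br tA sA)@_(kST, kTS) in Hts.
set c02 := (br tA sA)@_(kE2, kTSTS) in Hts.
clearbody l m c00 c10 c01 c20 c11 c02.
have HG : forall a b : bool, br << (a, 1%N) >> << (b, 1%N) >> =
    interp (GL l m c00 c10 c01 c20 c11 c02 a b).
  case; case => //=.
  by rewrite Hst Hts swap2I -scaleN1r -interp_lsc.
have h2 : (2%:R : F) != 0 by move/pcharf0P: charF0 => ->.
have K1 : c20 * c20 = 0 by geteq HqP HB HG false false true ((true,6%N),(false,1%N),(false,0%N)).
have K2 : - (c02 * c02) = 0 by geteq HqP HB HG false false true ((true,0%N),(false,1%N),(false,6%N)).
have K3 : c20 * c11 - l * c20 - l * m = 0 by geteq HqP HB HG false false true ((true,4%N),(false,1%N),(false,2%N)).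
have K4 : - (c00 * c02) + c00 * c20 + l * c00 = 0 by geteq HqP HB HG false false true ((true,0%N),(false,3%N),(false,0%N)).
have K5 : - (l * c11) = 0 by geteq HqP HB HG false false true ((true,2%N),(false,3%N),(false,2%N)).
have K7 : - 4%:R^-1 + c10 * c10 - c00 * c11 + c00 * c20 - l * c00 = 0 by geteq HqP HB HG false false true ((true,2%N),(false,1%N),(false,0%N)).
have K8 : 4%:R^-1 - c01 * c01 - c00 * c02 + c00 * c11 - l * c00 = 0 by geteq HqP HB HG false false true ((true,0%N),(false,1%N),(false,2%N)).
have K9 : c00 * c10 - c00 * c01 = 0 by geteq HqP HB HG false false true ((true,0%N),(false,1%N),(false,0%N)).
have K10 : c10 * c11 - c01 * c11 - l * c01 - l * c10 = 0 by geteq HqP HB HG false false true ((true,2%N),(false,1%N),(false,2%N)).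
have K6 : l * c01 + l * c10 = 0 by geteq HqP HB HG false false false ((false,3%N),(false,1%N),(false,1%N)).
have M4 : c00 * c02 - c00 * c20 - m * c00 = 0 by geteq HqP HB HG false true true ((true,0%N),(false,0%N),(true,3%N)).
have M5 : m * c11 = 0 by geteq HqP HB HG false true true ((true,2%N),(false,2%N),(true,3%N)).
have M7 : 4%:R^-1 - c10 * c10 + c00 * c11 - c00 * c20 + m * c00 = 0 by geteq HqP HB HG false true true ((true,2%N),(false,0%N),(true,1%N)).
have M6 : - (m * c01) - m * c10 = 0 by geteq HqP HB HG true true true ((true,1%N),(true,3%N),(true,1%N)).
have c20z : c20 = 0 by move/eqP: K1; rewrite mulf_eq0 orbb => /eqP.
have c02z : c02 = 0 by move/eqP: K2; rewrite oppr_eq0 mulf_eq0 orbb => /eqP.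
subst c20 c02.
have LM : l * m = 0 by apply: (from0 (c:=-1) K3); ring.
have std : forall a : F, a * a = 4%:R^-1 -> br tA sA = interp (GTS 0 a (-a) 0 0 0) ->
  exists delta : F, (delta = 1 \/ delta = -1) /\
    br tA sA = (delta * 2%:R^-1) *: (tens (amul sA tA) e1 - tens e2 (amul tA sA)).
  move=> a Ha ->; rewrite form_std.
  case: (half_cases h2 Ha) => ->; [exists 1 | exists (-1)]; split; auto.
    by rewrite mul1r.
  by rewrite mulN1r.
case: (eqVneq l 0) => [l0|lnz].
  subst l.
  case: (eqVneq m 0) => [m0|mnz].
    subst m; left.
    split; first by rewrite Hss form_zero.
    split; first by rewrite Htt form_zero.
    have E9 : c00 * (c10 - c01) = 0 by apply: (from0 (c:=1) K9); ring.
    have E10 : c11 * (c10 - c01) = 0 by apply: (from0 (c:=1) K10); ring.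
    case: (eqVneq c10 c01) => [e|ne].
      subst c01; right; exists c10, c00, c11; split.
        by apply/eqP; rewrite -subr_eq0; apply/eqP; apply: (from0 (c:=1) K7); ring.
      by rewrite Hts form_1b.
    have d0 : c10 - c01 != 0 by rewrite subr_eq0.
    have c00z : c00 = 0 by move/eqP: E9; rewrite mulf_eq0 (negbTE d0) orbF => /eqP.
    have c11z : c11 = 0 by move/eqP: E10; rewrite mulf_eq0 (negbTE d0) orbF => /eqP.
    subst c00 c11.
    have E7 : c10 * c10 = 4%:R^-1.
      by apply/eqP; rewrite -subr_eq0; apply/eqP; apply: (from0 (c:=1) K7); ring.
    have E8 : c01 * c01 = 4%:R^-1.
      by apply/eqP; rewrite -subr_eq0; apply/eqP; apply: (from0 (c:=-1) K8); ring.
    have P : (c10 - c01) * (c10 + c01) = c10 * c10 - c01 * c01 by ring.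
    rewrite E7 E8 subrr in P.
    move/eqP: P; rewrite mulf_eq0 (negbTE d0) /= addrC addr_eq0 => /eqP c01e.
    subst c01; left; exact: std c10 E7 Hts.
  right; right.
  have c00z : c00 = 0.
    have : m * c00 = 0 by apply: (from0 (c:=-1) M4); ring.
    by move/eqP; rewrite mulf_eq0 (negbTE mnz) /= => /eqP.
  have c11z : c11 = 0.
    by move/eqP: M5; rewrite mulf_eq0 (negbTE mnz) /= => /eqP.
  have c01e : c01 = - c10.
    have : m * (c01 + c10) = 0 by apply: (from0 (c:=-1) M6); ring.
    by move/eqP; rewrite mulf_eq0 (negbTE mnz) /= addr_eq0 => /eqP.
  subst c00 c11 c01.
  have E7 : c10 * c10 = 4%:R^-1.
    by apply/eqP; rewrite -subr_eq0; apply/eqP; apply: (from0 (c:=-1) M7); ring.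
  split; first by rewrite Htt form_zero.
  split; last exact: std c10 E7 Hts.
  by exists m; split => //; rewrite Hss form_ss.
have m0 : m = 0 by move/eqP: LM; rewrite mulf_eq0 (negbTE lnz) /= => /eqP.
subst m; right; left.
have c00z : c00 = 0.
  have : l * c00 = 0 by apply: (from0 (c:=1) K4); ring.
  by move/eqP; rewrite mulf_eq0 (negbTE lnz) /= => /eqP.
have c11z : c11 = 0.
  have : l * c11 = 0 by apply: (from0 (c:=-1) K5); ring.
  by move/eqP; rewrite mulf_eq0 (negbTE lnz) /= => /eqP.
have c01e : c01 = - c10.
  have : l * (c01 + c10) = 0 by apply: (from0 (c:=1) K6); ring.
  by move/eqP; rewrite mulf_eq0 (negbTE lnz) /= addr_eq0 => /eqP.
subst c00 c11 c01.
have E7 : c10 * c10 = 4%:R^-1.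
  by apply/eqP; rewrite -subr_eq0; apply/eqP; apply: (from0 (c:=1) K7); ring.
split; first by rewrite Hss form_zero.
split; last exact: std c10 E7 Hts.
by exists l; split => //; rewrite Htt form_tt.
Qed.
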